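(* Let $n$ be a positive integer with $n^2 \ge 811$. Every family of $n^2$ graphs, each with $n$ vertices, has an induced-universal graph with fewer than $15n^2/7$ vertices.
   Context: A graph $U$ is an induced-universal graph for a family $\mathscr{F}$ if every graph of $\mathscr{F}$ is isomorphic to an induced subgraph of $U$. *)

(* Defs.v *)
From mathcomp Require Import all_boot.
Set Implicit Arguments. Unset Strict Implicit. Unset Printing Implicit Defensive.

Definition simple_graph (V : finType) (e : rel V) : Prop :=
  (forall x y, e x y = e y x) /\ (forall x, e x x = false).

Definition induced_subgraph_iso (V W : finType) (e : rel V) (g : rel W) : Prop :=
  exists f : V -> W, injective f /\ forall x y, g (f x) (f y) = e x y.

Definition induced_universal (I V W : finType) (F : I -> rel V) (g : rel W) : Prop :=
  forall i, induced_subgraph_iso (F i) g.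

(* Main.v *)
Require Import Defs.
From mathcomp Require Import all_boot.
From mathcomp Require Import all_order all_algebra finfield.
From mathcomp Require Import ring zify.
Set Implicit Arguments. Unset Strict Implicit. Unset Printing Implicit Defensive.
Import GRing.Theory.

Section L1.
Local Open Scope ring_scope.
Lemma lines_eq (K : fieldType) (a b a' b' u v : K) : u != v ->
  a * u + b = a' * u + b' -> a * v + b = a' * v + b' -> a = a' /\ b = b'.
Proof.
move=> huv E1 E2.
have h : (a - a') * (u - v) = (a * u + b) - (a' * u + b') - ((a * v + b) - (a' * v + b')).
  by ring.
rewrite E1 E2 !subrr in h.
have : u - v != 0 by rewrite subr_eq0.
move=> nz.
move/eqP: h; rewrite mulf_eq0 (negbTE nz) orbF subr_eq0.
move/eqP=> Ea; split=> //; rewrite Ea in E1.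
by move/addrI: E1.
Qed.
End L1.

Lemma transfer (I V W : finType) (F : I -> rel V) (g : rel W) :
  simple_graph g -> induced_universal F g ->
  simple_graph (fun a b : 'I_#|W| => g (enum_val a) (enum_val b)) /\
  induced_universal F (fun a b : 'I_#|W| => g (enum_val a) (enum_val b)).
Proof.
move=> [gs gi] hu; split; first by split=> [x y|x]; [rewrite gs | rewrite gi].
move=> i; have [f [fi fe]] := hu i.
exists (fun x => enum_rank (f x)); split.
  by move=> x y /enum_rank_inj /fi.
by move=> x y /=; rewrite !enum_rankK.
Qed.

Section Constr.
Local Open Scope ring_scope.
Variables (K : finFieldType) (I : finType) (n : nat) (F : I -> rel 'I_n).
Variables (c : I -> K * K) (phi : 'I_n -> K).
Hypotheses (ci : injective c) (phii : injective phi)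
  (hF : forall i, simple_graph (F i)).

Definition lg : rel ('I_n * K) := fun p q =>
  [exists i, (p.2 == (c i).1 * phi p.1 + (c i).2) &&
             (q.2 == (c i).1 * phi q.1 + (c i).2) && F i p.1 q.1].

Lemma lg_simple : simple_graph lg.
Proof.
split.
  move=> p q; apply/existsP/existsP=> -[i /andP[/andP[h1 h2] h3]]; exists i;
  by rewrite h1 h2 /= (proj1 (hF i)) h3.
move=> p; apply/existsP=> -[i /andP[_ h]].
by rewrite (proj2 (hF i)) in h.
Qed.

Lemma lg_univ : induced_universal F lg.
Proof.
move=> i; exists (fun x => (x, (c i).1 * phi x + (c i).2)); split.
  by move=> x y [].
move=> x y /=; apply/idP/idP; last first.
  by move=> h; apply/existsP; exists i; rewrite /= !eqxx h.
case/existsP=> j /= /andP[/andP[/eqP e1 /eqP e2] h].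
have [exy|nxy] := eqVneq x y.
  by rewrite exy (proj2 (hF j)) in h.
have nphi : phi x != phi y by apply: contra nxy => /eqP /phii ->.
have [ea eb] := lines_eq nphi e1 e2.
have eij : c i = c j by case: (c i) (c j) ea eb => ? ? [? ?] /= -> ->.
by rewrite (ci eij).
Qed.

End Constr.

Theorem corollary2 (n : nat) (hn : 0 < n) (hn2 : 811 <= n ^ 2)
  (F : 'I_(n ^ 2) -> rel 'I_n) (hF : forall i, simple_graph (F i)) :
  exists (m : nat) (g : rel 'I_m),
    7 * m < 15 * n ^ 2 /\ simple_graph g /\ induced_universal F g.
Proof.
have n1 : 1 < n by rewrite ltnNge; apply: contraTN hn2 => h; rewrite -ltnNge; nia.
pose t := trunc_log 2 n.-1.
have lo : 2 ^ t <= n.-1 by apply: trunc_logP => //; lia.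
have hi : n.-1 < 2 ^ t.+1 by apply: trunc_log_ltn.
have [K _ cK] := pPrimePowerField (p := 2) (k := t.+1) isT isT.
have cKn : n <= #|K| by rewrite cK; lia.
have cK2 : 2 * n > #|K| by rewrite cK expnS; lia.
have cKK : n ^ 2 <= #|{: K * K}| by rewrite card_prod (expnS n 1) expn1; exact: leq_mul.
pose c (i : 'I_(n ^ 2)) : K * K := enum_val (widen_ord cKK i).
pose phi (x : 'I_n) : K := enum_val (widen_ord cKn x).
have ci : injective c by move=> i j /enum_val_inj [] /val_inj.
have phii : injective phi by move=> i j /enum_val_inj [] /val_inj.
have [gs gu] := transfer (@lg_simple K _ n F c phi hF) (@lg_univ K _ n F c phi ci phii hF).
exists #|{: 'I_n * K}|, (fun a b => lg F c phi (enum_val a) (enum_val b)).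
split=> //.
rewrite card_prod card_ord.
move: cK2; set q := #|K| => cK2.
nia.
Qed.
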